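(* Let $G$ be a weighted graph, $s\in[0,1]^V$ a vector of innate opinions, $z=(I+L)^{-1}s$ the equilibrium opinions, and $D=D(z)$. Let $k\in\mathbb{N}$ and let $s'\in[0,1]^V$ satisfy $\|s'-s\|_0\le k$. Let $z'=(I+L)^{-1}s'$ and $D'=D(z')$. Then $D'\le D+8\,d_{\max}\,k$, where $d_{\max}:=\max_{v\in V}\sum_{u\in V}w_{v,u}$ is the weighted maximum degree.
   Context: $G=(V,E,w)$ is a weighted undirected graph on $n=|V|$ vertices, with weights $w_{u,v}\in(0,1]$ for $(u,v)\in E$ and $w_{u,v}=0$ otherwise (and $w_{v,v}=0$). $L=\mathrm{Diag}(d)-A$ is the weighted Laplacian, where $A_{u,v}=w_{u,v}$ and $d_v=\sum_u w_{v,u}$. Disagreement of a vector $z\in\mathbb{R}^V$ is $D(z)=\sum_{(u,v)\in E} w_{u,v}(z_u-z_v)^2$ (each edge counted once). $\|x\|_0$ denotes the number of nonzero coordinates of $x$. *)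

(* Defs.v *)
From HB Require Import structures.
From mathcomp Require Import all_boot all_order all_algebra.
Set Implicit Arguments. Unset Strict Implicit. Unset Printing Implicit Defensive.
Import Order.TTheory GRing.Theory Num.Theory.
Local Open Scope ring_scope.

(* A weighted undirected graph on vertex set 'I_n is given by a weight
   function w with w u v in (0,1] on edges and 0 otherwise; i.e.
   w symmetric, w v v = 0, 0 <= w u v <= 1. *)
Definition weighted_graph (R : numDomainType) (n : nat) (w : 'I_n -> 'I_n -> R) : Prop :=
  (forall u v, w u v = w v u) /\ (forall v, w v v = 0) /\
  (forall u v, 0 <= w u v <= 1).

Definition wdeg (R : numDomainType) (n : nat) (w : 'I_n -> 'I_n -> R) (v : 'I_n) : R :=
  \sum_(u < n) w v u.

(* weighted maximum degree (degrees are >= 0, so starting at 0 is harmless) *)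
Definition dmax (R : realDomainType) (n : nat) (w : 'I_n -> 'I_n -> R) : R :=
  \big[Num.max/0]_(v < n) wdeg w v.

Definition laplacian (R : numDomainType) (n : nat) (w : 'I_n -> 'I_n -> R) : 'M[R]_n :=
  \matrix_(i, j) ((i == j)%:R * wdeg w i - w i j).

Definition equilibrium (R : numFieldType) (n : nat) (w : 'I_n -> 'I_n -> R)
  (s : 'cV[R]_n) : 'cV[R]_n :=
  invmx (1%:M + laplacian w) *m s.

Definition disagreement (R : numDomainType) (n : nat) (w : 'I_n -> 'I_n -> R)
  (z : 'cV[R]_n) : R :=
  \sum_(u < n) \sum_(v < n | (u < v)%N) w u v * (z u ord0 - z v ord0) ^+ 2.

Definition dist0 (R : numDomainType) (n : nat) (x y : 'cV[R]_n) : nat :=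
  #|[set i : 'I_n | x i ord0 != y i ord0]|.

Definition in_unit_cube (R : numDomainType) (n : nat) (s : 'cV[R]_n) : Prop :=
  forall i, 0 <= s i ord0 <= 1.

(* Main.v *)
Require Import Defs.
From HB Require Import structures.
From mathcomp Require Import all_boot all_order all_algebra.
From mathcomp Require Import ring lra.
Import Order.TTheory GRing.Theory Num.Theory.
Local Open Scope ring_scope.
Set Implicit Arguments. Unset Strict Implicit.

Section Aux.
Variables (R : realFieldType) (n : nat) (w : 'I_n -> 'I_n -> R).
Hypothesis hw : weighted_graph w.

Let M := (1%:M + laplacian w : 'M[R]_n).

Lemma Mx_entry (x : 'cV[R]_n) i :
  (M *m x) i ord0 = x i ord0 + \sum_j w i j * (x i ord0 - x j ord0).
Proof.
rewrite !mxE.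
have -> : \sum_j (1%:M + laplacian w) i j * x j ord0 =
  \sum_j ((i == j)%:R * ((1 + wdeg w i) * x j ord0) - w i j * x j ord0).
  by apply: eq_bigr => j _; rewrite !mxE; lra.
rewrite sumrB (bigD1 i) //= big1; last first.
  by move=> j /negbTE ji; rewrite eq_sym ji mul0r.
under [X in _ = _ + X]eq_bigr => j _ do rewrite mulrBr.
rewrite sumrB -mulr_suml eqxx /wdeg /= mul1r addr0; lra.
Qed.

Lemma w_ge0 u v : 0 <= w u v.
Proof. by case/andP: (proj2 (proj2 hw) u v). Qed.

Lemma MP (x : 'cV[R]_n) a b :
  (forall i, a <= (M *m x) i ord0 <= b) -> forall i, a <= x i ord0 <= b.
Proof.
move=> hy i; apply/andP; split.
- case: (@arg_minP _ R _ i xpredT (fun j => x j ord0) isT) => m _ hm.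
  have h1 := hy m; rewrite Mx_entry in h1.
  have h2 : \sum_j w m j * (x m ord0 - x j ord0) <= 0.
    rewrite -oppr_ge0 -sumrN; apply: sumr_ge0 => j _.
    have := hm j isT; have := w_ge0 m j => /= ? ?; nra.
  have := hm i isT => /= ?; case/andP: h1 => ? ?; lra.
- case: (@arg_maxP _ R _ i xpredT (fun j => x j ord0) isT) => m _ hm.
  have h1 := hy m; rewrite Mx_entry in h1.
  have h2 : 0 <= \sum_j w m j * (x m ord0 - x j ord0).
    apply: sumr_ge0 => j _.
    have := hm j isT; have := w_ge0 m j => /= ? ?; nra.
  have := hm i isT => /= ?; case/andP: h1 => ? ?; lra.
Qed.

Lemma M_tr : M^T = M.
Proof.
apply/matrixP => i j; rewrite !mxE eq_sym (proj1 hw i j).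
case: eqP => [->|] // _ /=; rewrite !mul0r; done.
Qed.

Lemma M_unit : M \in unitmx.
Proof.
rewrite unitmxE unitfE; apply/negP => /det0P [v vn0 hv].
have h : forall i, 0 <= v^T i ord0 <= 0.
  have e : M *m v^T = 0 by rewrite -{1}M_tr -trmx_mul hv trmx0.
  by apply: MP => i; rewrite e mxE lexx.
move/eqP: vn0; apply; apply/matrixP => i j; rewrite (ord1 i) !mxE.
by have := h j; rewrite mxE; lra.
Qed.


Lemma sum_pairs (F : 'I_n -> 'I_n -> R) : (forall u, F u u = 0) ->
  \sum_(u < n) \sum_(v < n) F u v = \sum_(u < n) \sum_(v < n | (u < v)%N) (F u v + F v u).
Proof.
move=> F0.
transitivity (\sum_(u < n) \sum_(v < n) ((if (u < v)%N then F u v else 0)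
                             + (if (v < u)%N then F u v else 0))).
  apply: eq_bigr => u _; apply: eq_bigr => v _.
  case: ltngtP => h; rewrite ?addr0 ?add0r //.
  by have -> : u = v by apply: val_inj; rewrite /= h.
under eq_bigr do rewrite big_split.
rewrite big_split /= [X in _ + X]exchange_big /= -big_split /=.
apply: eq_bigr => u _.
rewrite [in RHS]big_mkcond -big_split /=.
by apply: eq_bigr => v _; case: ifP; rewrite ?addr0.
Qed.

End Aux.

Lemma sub_entry (R : realFieldType) n (A B : 'cV[R]_n) i :
  (A - B) i ord0 = A i ord0 - B i ord0.
Proof. by rewrite !mxE. Qed.

Theorem theorem1p3 (R : realFieldType) (n : nat) (w : 'I_n -> 'I_n -> R)
  (s s' : 'cV[R]_n) (k : nat) :
  weighted_graph w ->
  in_unit_cube s -> in_unit_cube s' ->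
  (dist0 s' s <= k)%N ->
  disagreement w (equilibrium w s')
    <= disagreement w (equilibrium w s) + 8 * dmax w * k%:R.
Proof.
move=> hw hs hs' hk.
have hU := M_unit hw.
set M := 1%:M + laplacian w in hU.
set z := equilibrium w s; set z' := equilibrium w s'.
have Mz : M *m z = s by rewrite /z /equilibrium mulKVmx.
have Mz' : M *m z' = s' by rewrite /z' /equilibrium mulKVmx.
have z'01 : forall i, 0 <= z' i ord0 <= 1.
  by apply: (MP hw) => i; rewrite Mz'; exact: hs'.
have dm0 : 0 <= dmax w.
  rewrite /dmax; elim/big_ind: _ => //.
  - by move=> x y hx hy; rewrite le_max hx.
  - by move=> i _; apply: sumr_ge0 => j _; apply: w_ge0.
have degle : forall v, wdeg w v <= dmax w.
  by move=> v; rewrite /dmax (bigD1 v) //= le_max lexx.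
set h := invmx M *m z'.
set r := z' - h.
have Mr : forall i, (M *m r) i ord0 = \sum_j w i j * (z' i ord0 - z' j ord0).
  have Mh : M *m h = z' by rewrite /h mulKVmx.
  by move=> i; rewrite mulmxBr Mh sub_entry (@Mx_entry _ _ w z' i); lra.
have rb : forall i, - dmax w <= r i ord0 <= dmax w.
  apply: (MP hw) => i; rewrite Mr.
  have h1 : - wdeg w i <= \sum_j w i j * (z' i ord0 - z' j ord0).
    rewrite /wdeg -sumrN; apply: ler_sum => j _.
    have := z'01 i; have := z'01 j; have := w_ge0 hw i j; nra.
  have h2 : \sum_j w i j * (z' i ord0 - z' j ord0) <= wdeg w i.
    rewrite /wdeg; apply: ler_sum => j _.
    have := z'01 i; have := z'01 j; have := w_ge0 hw i j; nra.
  have := degle i; lra.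
set d := z' - z.
have Md : M *m d = s' - s by rewrite mulmxBr Mz Mz'.
have Msym : forall u v, M u v = M v u.
  by move=> u v; rewrite /M -[in LHS](M_tr hw) mxE.
have key : \sum_u r u ord0 * (s' u ord0 - s u ord0) =
   \sum_(u < n) \sum_(v < n | (u < v)%N)
      w u v * (d u ord0 - d v ord0) * (z' u ord0 - z' v ord0).
  transitivity (\sum_(u < n) \sum_(v < n) r u ord0 * (M u v * d v ord0)).
    by apply: eq_bigr => u _; rewrite -sub_entry -Md [(M *m d) u ord0]mxE mulr_sumr.
  rewrite exchange_big /=.
  transitivity (\sum_(v < n) d v ord0 * (M *m r) v ord0).
    apply: eq_bigr => v _; rewrite [(M *m r) v ord0]mxE mulr_sumr; apply: eq_bigr => u _.
    by rewrite Msym; ring.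
  transitivity (\sum_(v < n) \sum_(j < n) d v ord0 * (w v j * (z' v ord0 - z' j ord0))).
    by apply: eq_bigr => v _; rewrite Mr mulr_sumr.
  rewrite sum_pairs; last by move=> u; rewrite subrr !mulr0.
  apply: eq_bigr => u _; apply: eq_bigr => v _.
  rewrite (proj1 hw v u); ring.
have hD : disagreement w z' <= disagreement w z +
   2 * \sum_(u < n) \sum_(v < n | (u < v)%N)
      w u v * (d u ord0 - d v ord0) * (z' u ord0 - z' v ord0).
  rewrite /disagreement mulr_sumr -big_split /=; apply: ler_sum => u _.
  rewrite mulr_sumr -big_split /=; apply: ler_sum => v _.
  rewrite !sub_entry.
  have := mulr_ge0 (w_ge0 hw u v)
    (sqr_ge0 ((z' u ord0 - z' v ord0) - (z u ord0 - z v ord0))).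
  rewrite !expr2; nra.
have hS : \sum_u r u ord0 * (s' u ord0 - s u ord0) <= dmax w * k%:R.
  set A := [set i | s' i ord0 != s i ord0].
  apply: (le_trans (y := \sum_u (if u \in A then dmax w else 0))).
    apply: ler_sum => u _; rewrite inE; case: eqP => [e|ne] /=.
      by rewrite e subrr mulr0.
    have := rb u; have := hs u; have := hs' u; nra.
  rewrite -big_mkcond sumr_const -[X in X <= _]mulr_natr ler_wpM2l //.
  by rewrite ler_nat.
have : 0 <= dmax w * k%:R by apply: mulr_ge0.
rewrite -key in hD; lra.
Qed.
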